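(* Let $n=2p$ with $p$ a positive integer, $m$ a positive integer, and $s$ a real number with $0\le s\le p$. Define $$g(\alpha)=2\sum_{i=1}^p\Big(2i\alpha_i+m\big(\alpha_i+1-\tfrac{s}{p}\big)^+\Big)$$ on $\mathcal{P}=\{\alpha\in\mathbb{R}^p:\ \tfrac{s}{p}\ge\alpha_1\ge\cdots\ge\alpha_p,\ \sum_{i=1}^p\alpha_i=0\}$. If $m\ge 2(\lceil s\rceil-1)$, then $\min_{\alpha\in\mathcal{P}}g(\alpha)\ge d_2(s)$, where $d_2$ is the piecewise linear function connecting the points $(s,(n-2s)(m-s))$ for $s\in\mathbb{Z}$.
   Context: $(x)^+=\max(0,x)$. *)

(* Defs.v *)
From Stdlib Require Import Reals Lra Lia List.
Open Scope R_scope.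

Definition pos_part (x : R) : R := Rmax 0 x.

(* floor and ceiling on R, via Stdlib's [up] (up x is the unique integer
   with x < up x <= x + 1) *)
Definition Rfloor (x : R) : Z := (up x - 1)%Z.
Definition Rceiling (x : R) : Z := (- Rfloor (- x))%Z.

Definition sum1 (p : nat) (f : nat -> R) : R :=
  fold_right Rplus 0 (map f (seq 1 p)).

(* the polytope P, alpha indexed by 1..p *)
Definition in_P (p : nat) (s : R) (alpha : nat -> R) : Prop :=
  alpha 1%nat <= s / INR p /\
  (forall i : nat, (1 <= i < p)%nat -> alpha (S i) <= alpha i) /\
  sum1 p alpha = 0.

Definition g_fun (p m : nat) (s : R) (alpha : nat -> R) : R :=
  2 * sum1 p (fun i => 2 * INR i * alpha i
                       + INR m * pos_part (alpha i + 1 - s / INR p)).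

Definition d2_node (n m : nat) (k : Z) : R :=
  (INR n - 2 * IZR k) * (INR m - IZR k).

Definition d2_fun (n m : nat) (s : R) : R :=
  let k := Rfloor s in
  (IZR k + 1 - s) * d2_node n m k + (s - IZR k) * d2_node n m (k + 1).

(* Main.v *)
Require Import Defs.
From Stdlib Require Import Reals Lra Lia List ZArith Psatz.
Open Scope R_scope.

Definition Lsum (l : list nat) (f : nat -> R) : R := fold_right Rplus 0 (map f l).

Lemma Lsum_le l f h : (forall x, In x l -> h x <= f x) -> Lsum l h <= Lsum l f.
Proof.
  induction l as [|a l IH]; simpl; intros H; unfold Lsum in *; simpl; [lra|].
  assert (h a <= f a) by (apply H; auto).
  assert (fold_right Rplus 0 (map h l) <= fold_right Rplus 0 (map f l)) by (apply IH; auto).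
  lra.
Qed.

Lemma Lsum_plus l f h : Lsum l (fun x => f x + h x) = Lsum l f + Lsum l h.
Proof. induction l; unfold Lsum in *; simpl; [lra|]. rewrite IHl; lra. Qed.

Lemma Lsum_scal l a f : Lsum l (fun x => a * f x) = a * Lsum l f.
Proof. induction l; unfold Lsum in *; simpl; [lra|]. rewrite IHl; lra. Qed.

Lemma Lsum_app l1 l2 f : Lsum (l1 ++ l2) f = Lsum l1 f + Lsum l2 f.
Proof. induction l1; unfold Lsum in *; simpl; [lra|]. rewrite IHl1; lra. Qed.

Lemma Lsum_one a f : Lsum (a :: nil) f = f a.
Proof. unfold Lsum; simpl; lra. Qed.

Lemma Lsum_ext l f h : (forall x, f x = h x) -> Lsum l f = Lsum l h.
Proof. intros H; unfold Lsum; f_equal; apply map_ext; auto. Qed.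

Lemma Lsum_const n c : Lsum (seq 1 n) (fun _ => c) = INR n * c.
Proof.
  induction n; [unfold Lsum; simpl; lra|].
  rewrite seq_S, Lsum_app, Lsum_one, IHn, S_INR; lra.
Qed.

Lemma Lsum_id n : Lsum (seq 1 n) INR = INR n * (INR n + 1) / 2.
Proof.
  induction n; [unfold Lsum; simpl; lra|].
  rewrite seq_S, Lsum_app, Lsum_one, IHn.
  replace (1 + n)%nat with (S n) by lia. rewrite S_INR; lra.
Qed.

Definition hK (K : nat) (i : nat) : R :=
  if (i <=? K)%nat then 2 * (INR i - INR K - 1) else 0.

Lemma Lsum_hK n K :
  Lsum (seq 1 n) (hK K) =
  INR (Nat.min n K) * (INR (Nat.min n K) + 1) - 2 * INR (Nat.min n K) * (INR K + 1).
Proof.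
  induction n; [unfold Lsum; simpl; lra|].
  rewrite seq_S, Lsum_app, Lsum_one, IHn.
  replace (1 + n)%nat with (S n) by lia. unfold hK.
  destruct (Nat.leb_spec (S n) K).
  - rewrite !Nat.min_l by lia. rewrite S_INR; lra.
  - replace (Nat.min (S n) K) with (Nat.min n K) by lia. lra.
Qed.

Lemma chain (p : nat) (alpha : nat -> R) :
  (forall i : nat, (1 <= i < p)%nat -> alpha (S i) <= alpha i) ->
  forall i, (1 <= i <= p)%nat -> alpha i <= alpha 1%nat.
Proof.
  intros H i. induction i; intros Hi; [lia|].
  destruct (Nat.eq_dec i 0); [subst; lra|].
  specialize (H i ltac:(lia)). specialize (IHi ltac:(lia)). lra.
Qed.

Theorem mainTheorem6 (p m : nat) (s : R) :
  (0 < p)%nat -> (0 < m)%nat ->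
  0 <= s -> s <= INR p ->
  INR m >= 2 * (IZR (Rceiling s) - 1) ->
  forall alpha : nat -> R, in_P p s alpha ->
    g_fun p m s alpha >= d2_fun (2 * p)%nat m s.
Proof.
  intros Hp Hm Hs0 Hsp HmC alpha [H1 [Hmon Hsum]].
  unfold g_fun, sum1 in *.
  set (C := Rceiling s). set (j := Rfloor s).
  assert (Hj : IZR j <= s < IZR j + 1).
  { unfold j, Rfloor. rewrite minus_IZR. destruct (archimed s). lra. }
  assert (HC : s <= IZR C < s + 1).
  { unfold C, Rceiling, Rfloor. rewrite opp_IZR, minus_IZR. destruct (archimed (-s)). lra. }
  assert (HjC : (j <= C <= j + 1)%Z).
  { split.
    - apply le_IZR. lra.
    - assert (IZR C < IZR (j + 2)) by (rewrite plus_IZR; lra).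
      apply lt_IZR in H. lia. }
  change (IZR (Rceiling s)) with (IZR C) in HmC.
  assert (Hjd : Rfloor s = j) by reflexivity.
  clearbody C j.
  assert (HpR : 0 < INR p) by (apply lt_0_INR; lia).
  assert (HC0 : (0 <= C)%Z) by (apply le_IZR; lra).
  assert (HCp : (C <= Z.of_nat p)%Z).
  { assert (IZR C < IZR (Z.of_nat p + 1)) by (rewrite plus_IZR, <- INR_IZR_INZ; lra).
    apply lt_IZR in H. lia. }
  set (K := Z.to_nat (Z.of_nat p - C)).
  assert (HK : INR K = INR p - IZR C).
  { unfold K. rewrite INR_IZR_INZ, Z2Nat.id by lia. rewrite minus_IZR, <- INR_IZR_INZ. lra. }
  assert (HKp : (K <= p)%nat) by (unfold K; lia).
  clearbody K.
  set (t := s / INR p).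
  assert (Htd : t * INR p = s) by (unfold t; field; lra).
  change (s / INR p) with t in H1 |- *.
  clearbody t.
  set (c := INR K + 1).
  assert (Hcd : c = INR K + 1) by reflexivity.
  clearbody c.
  assert (Hpt : forall i, In i (seq 1 p) ->
     2 * INR i * (t - 1) + (2 * c + INR m) * (alpha i + 1 - t) + hK K i
     <= 2 * INR i * alpha i + INR m * pos_part (alpha i + 1 - t)).
  { intros i Hi. apply in_seq in Hi.
    assert (Hai : alpha i <= t) by (pose proof (chain p alpha Hmon i ltac:(lia)); lra).
    assert (Hip : INR i <= INR p) by (apply le_INR; lia).
    assert (H2i : 2 * INR i <= 2 * c + INR m) by (rewrite Hcd, HK; lra).
    set (e := alpha i + 1 - t).
    replace (alpha i) with (e + t - 1) by (unfold e; lra).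
    unfold pos_part, hK.
    destruct (Nat.leb_spec i K) as [HiK|HiK].
    - assert (INR i <= INR K) by (apply le_INR; lia).
      destruct (Rle_dec 0 e).
      + rewrite Rmax_right by lra. assert (e <= 1) by (unfold e; lra). rewrite Hcd. nra.
      + rewrite Rmax_left by lra. rewrite Hcd in *. nra.
    - assert (INR K + 1 <= INR i) by (rewrite <- S_INR; apply le_INR; lia).
      destruct (Rle_dec 0 e).
      + rewrite Rmax_right by lra. rewrite Hcd. nra.
      + rewrite Rmax_left by lra. nra. }
  apply Lsum_le in Hpt.
  assert (E1 : Lsum (seq 1 p) (fun x => 2 * INR x * (t - 1)) = (t - 1) * (INR p * (INR p + 1))).
  { rewrite (Lsum_ext _ _ (fun x => ((t - 1) * 2) * INR x)) by (intros; ring).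
    rewrite Lsum_scal, Lsum_id; field. }
  fold (Lsum (seq 1 p) alpha) in Hsum.
  assert (E2 : Lsum (seq 1 p) (fun x => alpha x + 1 - t) = INR p * (1 - t)).
  { rewrite (Lsum_ext _ _ (fun x => alpha x + (1 - t))) by (intros; ring).
    rewrite Lsum_plus, Lsum_const, Hsum; ring. }
  rewrite !Lsum_plus, Lsum_scal, E1, E2, Lsum_hK, Nat.min_r in Hpt by lia.
  change (fold_right Rplus 0 (map (fun i : nat => 2 * INR i * alpha i + INR m * pos_part (alpha i + 1 - t)) (seq 1 p))) with (Lsum (seq 1 p) (fun i : nat => 2 * INR i * alpha i + INR m * pos_part (alpha i + 1 - t))).
  rewrite Lsum_plus.
  assert (Ht : INR p * (1 - t) = INR p - s) by (rewrite <- Htd; ring).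
  assert (Ht2 : (t - 1) * (INR p * (INR p + 1)) = (s - INR p) * (INR p + 1))
    by (rewrite <- Htd; ring).
  rewrite Ht, Ht2 in Hpt.
  unfold d2_fun, d2_node. rewrite Hjd. rewrite mult_INR. simpl (INR 2).
  rewrite plus_IZR.
  rewrite Hcd in Hpt. rewrite HK in Hpt.
  assert (Hcase : (C = j /\ s = IZR j) \/ C = (j + 1)%Z).
  { destruct (Z.eq_dec C j); [left; split; auto; subst; lra | right; lia]. }
  destruct Hcase as [[F1 F2] | F1]; rewrite F1 in Hpt; [rewrite F2 in *|rewrite plus_IZR in Hpt];
  nra.
Qed.
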